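(* Let $(X,\pi)$ be a symmetric two-player game with relative payoff function $\Delta$. If $X$ is compact and $\Delta$ is upper semicontinuous and additively separable, then imitation is essentially unbeatable.
   Context: A symmetric two-player game $(X,\pi)$: common action set $X$ (here a topological space) and bounded payoff $\pi:X\times X\to\mathbb{R}$, $\pi(x,y)$ = payoff of the player choosing $x$ against $y$. Relative payoff: $\Delta(x,y)=\pi(x,y)-\pi(y,x)$; it is additively separable if $\Delta(x,y)=f(x)+g(y)$ for some functions $f,g:X\to\mathbb{R}$. Let $\hat\Delta:=\max_{x,y\in X}\Delta(x,y)$. Imitate-the-best: given initial $y_0\in X$ and any opponent sequence $(x_t)_{t\ge0}$ in $X$, $y_t=x_{t-1}$ if $\Delta(x_{t-1},y_{t-1})>0$ and $y_t=y_{t-1}$ otherwise. Imitation is essentially unbeatable if for every $y_0\in X$ and every sequence $(x_t)$, $\limsup_{T\to\infty}\sum_{t=0}^T\Delta(x_t,y_t)\le\hat\Delta$. *)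

(* Defs.v *)
From HB Require Import structures.
From mathcomp Require Import all_boot all_order all_algebra.
From mathcomp Require Import all_classical all_reals all_analysis.
Set Implicit Arguments. Unset Strict Implicit. Unset Printing Implicit Defensive.
Import Order.TTheory GRing.Theory Num.Theory.
Local Open Scope ring_scope.

Definition rel_payoff {X : Type} {R : realType} (pi : X -> X -> R) (x y : X) : R :=
  pi x y - pi y x.

Definition bounded_payoff {X : Type} {R : realType} (pi : X -> X -> R) : Prop :=
  exists M : R, forall x y, `|pi x y| <= M.

Definition upper_semicontinuous_fun {T : topologicalType} {R : realType}
  (h : T -> R) : Prop :=
  forall (p : T) (a : R), h p < a -> exists2 V, nbhs p V & forall q, V q -> h q < a.

Definition additively_separable {X : Type} {R : realType} (D : X -> X -> R) : Prop :=
  exists f g : X -> R, forall x y, D x y = f x + g y.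

(* hat Delta := max_{x,y} Delta(x,y) (taken as the supremum, which is attained
   under the hypotheses of the theorem). *)
Definition Delta_hat {X : Type} {R : realType} (D : X -> X -> R) : R :=
  sup (range (fun p : X * X => D p.1 p.2)).

Fixpoint imitate {X : Type} {R : realType} (D : X -> X -> R) (y0 : X)
  (xs : nat -> X) (t : nat) : X :=
  match t with
  | 0 => y0
  | t'.+1 => let y := imitate D y0 xs t' in
             if 0 < D (xs t') y then xs t' else y
  end.

Definition essentially_unbeatable {X : Type} {R : realType} (D : X -> X -> R) : Prop :=
  forall (y0 : X) (xs : nat -> X),
    (limn_esup (fun T : nat =>
        ((\sum_(0 <= t < T.+1) D (xs t) (imitate D y0 xs t))%:E)) <= (Delta_hat D)%:E)%E.

(* Main.v *)
Require Import Defs.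
From HB Require Import structures.
From mathcomp Require Import all_boot all_order all_algebra.
From mathcomp Require Import all_classical all_reals all_analysis.
Import Order.TTheory GRing.Theory Num.Theory.
Local Open Scope ring_scope.

Lemma esup_le_ub (R : realType) (u : (\bar R)^nat) (l : \bar R) :
  (forall n, u n <= l)%E -> (limn_esup u <= l)%E.
Proof.
move=> ul; rewrite limn_esup_lim; apply: lime_le; first exact: is_cvg_esups.
near=> m; apply: ge_ereal_sup => _ [n _ <-]; exact: ul.
Unshelve. all: by end_near. Qed.

Theorem proposition3 (R : realType) (X : topologicalType) (pi : X -> X -> R) :
  bounded_payoff pi ->
  compact [set: X] ->
  upper_semicontinuous_fun (fun p : X * X => rel_payoff pi p.1 p.2) ->
  additively_separable (rel_payoff pi) ->
  essentially_unbeatable (rel_payoff pi).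
Proof.
move=> [M hM] _ _ [f [g hfg]] y0 xs.
set D := rel_payoff pi.
have hD : forall x y, D x y = f x - f y.
  move=> x y; have h0 : D y y = 0 by rewrite /D /rel_payoff subrr.
  have hg : g y = - f y by apply/eqP; rewrite -addr_eq0 addrC -(hfg y y) -/D h0.
  by rewrite /D hfg hg.
have hub : forall x y, D x y <= Delta_hat D.
  move=> x y; apply: sup_ubound; last by exists (x, y).
  exists (M + M) => _ [p _ <-]; rewrite /D /rel_payoff.
  exact: le_trans (ler_norm _) (le_trans (ler_normB _ _) (lerD (hM _ _) (hM _ _))).
have key : forall T, \sum_(0 <= t < T.+1) D (xs t) (imitate D y0 xs t)
                     <= D (imitate D y0 xs T.+1) y0.
  elim=> [|T IH].
    rewrite big_nat1 /=; case: ifP => h; first by [].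
    by rewrite [D y0 y0]hD subrr leNgt h.
  rewrite big_nat_recr //= -/(imitate D y0 xs T.+1).
  set y := imitate D y0 xs T.+1.
  case: ifP => h.
    have -> : D (xs T.+1) y0 = D y y0 + D (xs T.+1) y by rewrite !hD [RHS]addrC addrA subrK.
    by rewrite lerD2r.
  apply: le_trans (_ : D y y0 + 0 <= _); last by rewrite addr0.
  by rewrite lerD // leNgt h.
apply: esup_le_ub => n; rewrite lee_fin.
exact: le_trans (key n) (hub _ _).
Qed.
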